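(* Let $R=\mathbb{Z}_4+u\mathbb{Z}_4$ with $u^2=0$. Let $\tau:R^n\to R^n$ be the $(1+2u)$-constacyclic shift $\tau(c_0,\dots,c_{n-1})=((1+2u)c_{n-1},c_0,\dots,c_{n-2})$, let $\sigma:\mathbb{Z}_4^{2n}\to\mathbb{Z}_4^{2n}$ be the cyclic shift $\sigma(x_0,\dots,x_{2n-1})=(x_{2n-1},x_0,\dots,x_{2n-2})$, and let $\phi:R^n\to\mathbb{Z}_4^{2n}$ be the Gray map $\phi(c_0,\dots,c_{n-1})=(b_0,\dots,b_{n-1},2a_0+b_0,\dots,2a_{n-1}+b_{n-1})$ where $c_i=a_i+ub_i$ with $a_i,b_i\in\mathbb{Z}_4$. Then $\phi\circ\tau=\sigma\circ\phi$. *)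

(* Defs.v *)
From mathcomp Require Import all_boot all_algebra.
Set Implicit Arguments. Unset Strict Implicit. Unset Printing Implicit Defensive.
Import GRing.Theory.
Local Open Scope ring_scope.

(* The ring R = Z_4 + u Z_4 with u^2 = 0: the pair (a, b) represents a + u b. *)
Definition R := ('Z_4 * 'Z_4)%type.
Definition R_add (x y : R) : R := (x.1 + y.1, x.2 + y.2).
Definition R_mul (x y : R) : R := (x.1 * y.1, x.1 * y.2 + x.2 * y.1).
Definition one_plus_2u : R := (1, 2%:R).

(* (1+2u)-constacyclic shift on R^n:
   tau (c_0,...,c_{n-1}) = ((1+2u) c_{n-1}, c_0, ..., c_{n-2}).
   ord_pred i is i-1 mod n. *)
Definition tau n (c : {ffun 'I_n -> R}) : {ffun 'I_n -> R} :=
  [ffun i : 'I_n => if (i : nat) == 0%N then R_mul one_plus_2u (c (ord_pred i))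
                    else c (ord_pred i)].

Definition sigma m (x : {ffun 'I_m -> 'Z_4}) : {ffun 'I_m -> 'Z_4} :=
  [ffun k : 'I_m => x (ord_pred k)].

Definition gray n (c : {ffun 'I_n -> R}) : {ffun 'I_(n + n) -> 'Z_4} :=
  [ffun k : 'I_(n + n) => match split k with
                         | inl i => (c i).2
                         | inr i => 2%:R * (c i).1 + (c i).2
                         end].

(* Main.v *)
Require Import Defs.
From mathcomp Require Import all_boot all_algebra.
From mathcomp Require Import zify ring.
Import GRing.Theory.
Local Open Scope ring_scope.

Lemma ord_predE m (i : 'I_m) :
  nat_of_ord (ord_pred i) = if (i : nat) == 0%N then m.-1 else (i : nat).-1.
Proof.
rewrite /ord_pred /=; case: i => i Hi /=.
case: eqP => [->|H]; first by rewrite add0n modn_small //; lia.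
rewrite -subn1 addnC -addnBA; last lia.
by rewrite modnDl modn_small; lia.
Qed.

Lemma Z4aux (x y : 'Z_4) : 2%:R * x + (y + 2%:R * x) = y.
Proof. by case: x => [[|[|[|[|x]]]] Hx] //; case: y => [[|[|[|[|y]]]] Hy] //; apply/val_inj. Qed.

Theorem proposition5p1 (n : nat) (c : {ffun 'I_n -> R}) :
  gray (tau c) = sigma (gray c).
Proof.
apply/ffunP => k; rewrite !ffunE.
have Hp := ord_predE _ k.
case: splitP => [i Hki | i Hki]; case: splitP => [j Hj | j Hj]; rewrite !ffunE.
all: have Hq := ord_predE _ i.
all: have Hi := ltn_ord i; have Hjn := ltn_ord j.
all: case: (boolP ((i:nat) == 0%N)) => Ei; rewrite ?Ei ?(negPf Ei) in Hq *; case: (boolP ((k:nat) == 0%N)) => Ek; rewrite ?Ek ?(negPf Ek) in Hp.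
all: try (move/eqP: Ei => Ei); try (move/eqP: Ek => Ek).
all: try (exfalso; lia).
all: have Hij : ord_pred i = j.
all: try (apply: ord_inj; rewrite Hq; lia).

all: rewrite ?Hij /= ?mul1r //.

all: try by rewrite addrC.
exact: Z4aux.
Qed.
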